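(* Let $A_1,A_2,A_3$ be $m\times m$ complex positive semidefinite matrices. Then $$\det(A_1+A_2+A_3)+\det A_1+\det A_2+\det A_3\;\ge\;\det(A_1+A_2)+\det(A_1+A_3)+\det(A_2+A_3).$$ *)

(* Defs.v *)
From HB Require Import structures.
From mathcomp Require Import all_boot all_order all_algebra.
Set Implicit Arguments. Unset Strict Implicit. Unset Printing Implicit Defensive.
Import Order.TTheory GRing.Theory Num.Theory.
Local Open Scope ring_scope.

Definition ctrmx (C : numClosedFieldType) (m n : nat) (A : 'M[C]_(m, n))
  : 'M[C]_(n, m) := (map_mx Num.conj A)^T.

Definition psd (C : numClosedFieldType) (m : nat) (A : 'M[C]_m) : Prop :=
  ctrmx A = A /\
  forall x : 'cV[C]_m, 0 <= (ctrmx x *m A *m x) 0 0.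

(* Main.v *)
Require Import Defs.
From HB Require Import structures.
From mathcomp Require Import all_boot all_order all_algebra perm.
Set Implicit Arguments. Unset Strict Implicit. Unset Printing Implicit Defensive.
Import Order.TTheory GRing.Theory Num.Theory.
Local Open Scope ring_scope.
Local Open Scope sesquilinear_scope.

Lemma CB_step (R : comNzRingType) m (J : finType) (x : 'I_m -> J -> R) (y : J -> 'I_m -> R) :
  \det (\matrix_(i, l) \sum_j x i j * y j l) =
  \sum_(f : {ffun 'I_m -> J}) (\prod_i x i (f i)) * \det (\matrix_(i, l) y (f i) l).
Proof.
rewrite /determinant.
under eq_bigr => s _.
  under eq_bigr => i _ do rewrite mxE.
  rewrite bigA_distr_bigA big_distrr /=.
  under eq_bigr => f _ do rewrite big_split /= mulrCA.
  over.
rewrite exchange_big /=; apply: eq_bigr => f _; rewrite big_distrr /=.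
by apply: eq_bigr => s _; congr (_ * (_ * _)); apply: eq_bigr => i _; rewrite mxE.
Qed.

Lemma CB (R : comNzRingType) m (J : finType) (x : 'I_m -> J -> R) (y : J -> 'I_m -> R) :
  (m`!)%:R * \det (\matrix_(i, l) \sum_j x i j * y j l) =
  \sum_(f : {ffun 'I_m -> J}) \det (\matrix_(i, k) x i (f k)) * \det (\matrix_(i, l) y (f i) l).
Proof.
rewrite mulr_natl -card_Sn -sumr_const.
have E (s : 'S_m) : \det (\matrix_(i, l) \sum_j x i j * y j l) =
   \sum_(f : {ffun 'I_m -> J}) (-1) ^+ s * (\prod_i x i (f (s i))) * \det (\matrix_(i, l) y (f i) l).
  rewrite CB_step (reindex_inj (h := fun f : {ffun 'I_m -> J} => [ffun i => f (s i)])); last first.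
    move=> f g /ffunP H; apply/ffunP => i.
    by have := H (s^-1 i)%g; rewrite !ffunE permKV.
  apply: eq_bigr => f _.
  under eq_bigr => i _ do rewrite ffunE.
  have -> : \matrix_(i, l) y ([ffun i => f (s i)] i) l = row_perm s (\matrix_(i, l) y (f i) l).
    by apply/matrixP => i l; rewrite !mxE ffunE.
  by rewrite row_permE det_mulmx det_perm mulrCA mulrA.
under eq_bigr => s _ do rewrite (E s).
rewrite exchange_big /=; apply: eq_bigr => f _.
rewrite -big_distrl /=; congr (_ * _).
rewrite /determinant; apply: eq_bigr => s _; congr (_ * _).
by apply: eq_bigr => i _; rewrite mxE.
Qed.
Lemma psd_decomp (C : numClosedFieldType) m (A : 'M[C]_m) : psd A ->
  exists P : 'M[C]_m, exists d : 'rV[C]_m,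
   [/\ P \is unitarymx, forall j, 0 <= d 0 j & A = P^t* *m diag_mx d *m P].
Proof.
move=> [hA pA].
have Ah : A \is hermsymmx.
  rewrite is_hermitianmxE expr0 scale1r; apply/eqP.
  by rewrite -{1}hA /ctrmx map_trmx.
have /hermitian_normalmx /orthomx_spectralP AE := Ah.
set P := spectralmx A in AE; set d := spectral_diag A in AE.
have Pu : P \is unitarymx by apply: spectral_unitarymx.
rewrite invmx_unitary // in AE.
exists P, d; split => // j.
have := pA (P^t* *m delta_mx j 0).
have -> : ctrmx (P^t* *m delta_mx j (0 : 'I_1)) = delta_mx 0 j *m P.
  rewrite /ctrmx map_mxM trmx_mul.
  apply/matrixP=> a b; rewrite !mxE; apply: eq_bigr => k _; rewrite !mxE.
  rewrite /= conjCK andbC; case: (_ && _); rewrite ?conjC0 ?conjC1 //.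
rewrite AE !mulmxA -(mulmxA _ P (P^t*)) (unitarymxP Pu) mulmx1 -(mulmxA _ P (P^t*)) (unitarymxP Pu) mulmx1.
rewrite -mulmxA mul_diag_mx.
rewrite !mxE (bigD1 j) //= big1 ?addr0; last first.
  by move=> k kj; rewrite !mxE (negPf kj) mul0r.
by rewrite !mxE !eqxx mulr1 mul1r.
Qed.
Definition cterm (C : numClosedFieldType) m (P : 'I_3 -> 'M[C]_m) (d : 'I_3 -> 'rV[C]_m)
  (f : {ffun 'I_m -> 'I_3 * 'I_m}) : C :=
  (\prod_i d (f i).1 0 (f i).2) *
  (\det (\matrix_(i, l) P (f i).1 (f i).2 l) * (\det (\matrix_(i, l) P (f i).1 (f i).2 l))^*).

Lemma prod_nat_forall (R : comNzRingType) m (g : 'I_m -> bool) :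
  \prod_i ((g i)%:R : R) = ([forall i, g i])%:R.
Proof.
case: (boolP [forall i, g i]) => [/forallP H | /forallP H].
  by rewrite big1 // => i _; rewrite H.
have [i gi] : exists i, ~~ g i by apply/existsP; rewrite -negb_forall; apply/forallP.
by rewrite (bigD1 i) //= (negPf gi) mul0r.
Qed.

Lemma expand (C : numClosedFieldType) m (P : 'I_3 -> 'M[C]_m) (d : 'I_3 -> 'rV[C]_m)
  (b : 'I_3 -> bool) :
  m`!%:R * \det (\sum_k (b k)%:R *: (P k ^t* *m diag_mx (d k) *m P k)) =
  \sum_(f : {ffun 'I_m -> 'I_3 * 'I_m}) ([forall i, b (f i).1])%:R * cterm P d f.
Proof.
have -> : \sum_k (b k)%:R *: (P k ^t* *m diag_mx (d k) *m P k) =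
   \matrix_(i, l) \sum_(kj : 'I_3 * 'I_m)
      (P kj.1 kj.2 i)^* * ((b kj.1)%:R * d kj.1 0 kj.2 * P kj.1 kj.2 l).
  apply/matrixP => i l; rewrite summxE mxE.
  transitivity (\sum_k \sum_j (P k j i)^* * ((b k)%:R * d k 0 j * P k j l));
    last by rewrite pair_bigA.
  apply: eq_bigr => k _.
  rewrite mul_mx_diag !mxE big_distrr /=; apply: eq_bigr => j _.
  by rewrite !mxE !mulrA [_ * (P k j i)^*]mulrC.
rewrite (CB (fun i (kj : 'I_3 * 'I_m) => (P kj.1 kj.2 i)^*) (fun kj l => (b kj.1)%:R * d kj.1 0 kj.2 * P kj.1 kj.2 l)).
apply: eq_bigr => f _.
set M := \matrix_(i, l) P (f i).1 (f i).2 l.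
have -> : \matrix_(i, k) (P (f k).1 (f k).2 i)^* = (M ^T) ^ Num.conj.
  by apply/matrixP => i k; rewrite !mxE.
have -> : \matrix_(i, l) ((b (f i).1)%:R * d (f i).1 0 (f i).2 * P (f i).1 (f i).2 l)
   = diag_mx (\row_i ((b (f i).1)%:R * d (f i).1 0 (f i).2)) *m M.
  by rewrite mul_diag_mx; apply/matrixP => i l; rewrite !mxE.
rewrite det_map_mx det_tr det_mulmx det_diag.
under eq_bigr => i _ do rewrite mxE.
rewrite big_split /= prod_nat_forall /cterm -/M.
by rewrite mulrC -!mulrA; congr (_ * (_ * _)); rewrite mulrC.
Qed.

Lemma comb m (g : 'I_m -> 'I_3) :
 ([forall i, (val (g i) == 0%N) || (val (g i) == 1%N)] +
  [forall i, (val (g i) == 0%N) || (val (g i) == 2%N)] +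
  [forall i, (val (g i) == 1%N) || (val (g i) == 2%N)] <=
  [forall i : 'I_m, true] + [forall i, val (g i) == 0%N] + [forall i, val (g i) == 1%N]
   + [forall i, val (g i) == 2%N])%N.
Proof.
have -> : [forall i : 'I_m, true] by apply/forallP.
have h1 : [forall i, (val (g i) == 0%N) || (val (g i) == 1%N)] ->
  [forall i, (val (g i) == 0%N) || (val (g i) == 2%N)] -> [forall i, val (g i) == 0%N].
  move=> /forallP H1 /forallP H2; apply/forallP => i; move: (H1 i) (H2 i).
  by case: (g i) => [[|[|[|n]]] ?].
have h2 : [forall i, (val (g i) == 0%N) || (val (g i) == 1%N)] ->
  [forall i, (val (g i) == 1%N) || (val (g i) == 2%N)] -> [forall i, val (g i) == 1%N].
  move=> /forallP H1 /forallP H2; apply/forallP => i; move: (H1 i) (H2 i).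
  by case: (g i) => [[|[|[|n]]] ?].
have h3 : [forall i, (val (g i) == 0%N) || (val (g i) == 2%N)] ->
  [forall i, (val (g i) == 1%N) || (val (g i) == 2%N)] -> [forall i, val (g i) == 2%N].
  move=> /forallP H1 /forallP H2; apply/forallP => i; move: (H1 i) (H2 i).
  by case: (g i) => [[|[|[|n]]] ?].
move: h1 h2 h3.
case: [forall i, (val (g i) == 0%N) || (val (g i) == 1%N)];
case: [forall i, (val (g i) == 0%N) || (val (g i) == 2%N)];
case: [forall i, (val (g i) == 1%N) || (val (g i) == 2%N)];
case: [forall i, val (g i) == 0%N]; case: [forall i, val (g i) == 1%N];
case: [forall i, val (g i) == 2%N] => //= h1 h2 h3;
  first [ by have := h1 isT isT | by have := h2 isT isT | by have := h3 isT isT ].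
Qed.

Lemma cterm_ge0 (C : numClosedFieldType) m (P : 'I_3 -> 'M[C]_m) (d : 'I_3 -> 'rV[C]_m) f :
  (forall k j, 0 <= d k 0 j) -> 0 <= cterm P d f.
Proof.
move=> dge; rewrite /cterm mulr_ge0 //; first by apply: prodr_ge0 => i _.
by rewrite -normCK exprn_ge0.
Qed.

Theorem corollary3p2 (C : numClosedFieldType) (m : nat) (A1 A2 A3 : 'M[C]_m) :
  psd A1 -> psd A2 -> psd A3 ->
  \det (A1 + A2) + \det (A1 + A3) + \det (A2 + A3)
    <= \det (A1 + A2 + A3) + \det A1 + \det A2 + \det A3.
Proof.
move=> /psd_decomp [P1 [d1 [_ D1 E1]]] /psd_decomp [P2 [d2 [_ D2 E2]]]
       /psd_decomp [P3 [d3 [_ D3 E3]]].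
pose P := fun k : 'I_3 => if val k == 0%N then P1 else if val k == 1%N then P2 else P3.
pose d := fun k : 'I_3 => if val k == 0%N then d1 else if val k == 1%N then d2 else d3.
have dge : forall k j, 0 <= d k 0 j.
  by move=> [[|[|[|n]]] ?] j //=.
have T (b : 'I_3 -> bool) :
  m`!%:R * \det ((b ord0)%:R *: A1 + (b (@Ordinal 3 1 isT))%:R *: A2
                   + (b (@Ordinal 3 2 isT))%:R *: A3) =
  \sum_(f : {ffun 'I_m -> 'I_3 * 'I_m}) ([forall i, b (f i).1])%:R * cterm P d f.
  rewrite -expand; congr (_ * \det _).
  have PA k : P k ^t* *m diag_mx (d k) *m P k =
     if val k == 0%N then A1 else if val k == 1%N then A2 else A3.
    by case: k => [[|[|[|n]]] ?] //=.
  under eq_bigr => k _ do rewrite PA.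
  rewrite !big_ord_recr big_ord0 /= add0r.
  by congr (_ *: _ + _ *: _ + _ *: _); congr (_ %:R); congr b; apply: val_inj.
have e123 := T (fun _ => true).
have e1 := T (fun k => val k == 0%N).
have e2 := T (fun k => val k == 1%N).
have e3 := T (fun k => val k == 2%N).
have e12 := T (fun k => (val k == 0%N) || (val k == 1%N)).
have e13 := T (fun k => (val k == 0%N) || (val k == 2%N)).
have e23 := T (fun k => (val k == 1%N) || (val k == 2%N)).
rewrite /= ?scale1r ?scale0r ?addr0 ?add0r in e123 e1 e2 e3 e12 e13 e23.
rewrite -(@ler_pM2l _ (m`!%:R)) ?ltr0n ?fact_gt0 //.
rewrite !mulrDr e123 e1 e2 e3 e12 e13 e23 -!big_split /=.
apply: ler_sum => f _; rewrite -!mulrDl; apply: ler_wpM2r; first exact: cterm_ge0.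
rewrite -!natrD ler_nat.
exact: (comb (fun i => (f i).1)).
Qed.
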